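(* In the standard LLP setup, suppose $K^\uparrow\neq\emptyset$. If $N_{mcf\bar c}$ is defined and $N\ge N_{mcf\bar c}+1$, then $L(G,\gamma^N_{optm})=\overline{K^\uparrow}$.
   Context: Standard LLP setup. $\Sigma=\Sigma_c\,\dot\cup\,\Sigma_{uc}$ is a finite alphabet partitioned into controllable and uncontrollable events. The plant $G$ has generated language $L(G)$ and marked language $L_m(G)$ with $L(G)=\overline{L_m(G)}$ ($\overline{M}$ = set of prefixes of strings in $M$). The legal language $K\subseteq L_m(G)$ satisfies $K=\overline{K}\cap L_m(G)$ ($K$ need not be prefix-closed). For a prefix-closed $L$, $M$ is controllable w.r.t. $L$ if $\overline{M}\Sigma_{uc}\cap L\subseteq\overline{M}$; $K^\uparrow$ is the supremal sublanguage of $K$ controllable w.r.t. $L(G)$. For a language $L$ and $s\in\Sigma^*$: $L/s=\{t: st\in L\}$; $L|_N=\{t\in L:|t|\le N\}$; $\Sigma_{L(G)}(s)=\{\sigma\in\Sigma: s\sigma\in L(G)\}$. $M^{\uparrow/s|_N}$ is the supremal sublanguage of $M$ controllable w.r.t. $L(G)/s|_N$. Optimistic attitude: $f^N_{optm}(s)=[K/s|_N\cup(\overline{K}/s|_N\setminus\overline{K}/s|_{N-1})]^{\uparrow/s|_N}$; control policy $\gamma^N_{optm}(s)=(\overline{f^N_{optm}(s)}\cap\Sigma)\cup(\Sigma_{uc}\cap\Sigma_{L(G)}(s))$. Closed-loop language $L(G,\gamma)$: $\epsilon\in L(G,\gamma)$, and $s\sigma\in L(G,\gamma)$ iff $s\in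 L(G,\gamma)$, $s\sigma\in L(G)$, $\sigma\in\gamma(s)$. Define $L_c(G)=\{s\in L(G): s\sigma\notin L(G)\ \forall\sigma\in\Sigma_{uc}\}$, $K_{mc}=K\cap L_c(G)$, and $K_{f\bar c}=\{s\in\overline{K}: \exists\sigma\in\Sigma_{uc},\ s\sigma\in L(G)\setminus\overline{K}\}$. Then $N_{mcf\bar c}=\max\{|t|: \exists s\in K_{mc}\cup\{\epsilon\},\ st\in K_{f\bar c}\text{ and } sv\notin K_{f\bar c}\cup K_{mc}\text{ for every nonempty proper prefix } v \text{ of } t\}$ if this maximum exists; otherwise undefined. *)

(* Defs.v *)
From mathcomp Require Import all_boot.
Set Implicit Arguments. Unset Strict Implicit. Unset Printing Implicit Defensive.

Section LLP.
Variable Sigma : finType.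

Definition lang := seq Sigma -> Prop.

Definition subl (M1 M2 : lang) : Prop := forall s, M1 s -> M2 s.

Definition pref (M : lang) : lang := fun s => exists t, M (s ++ t).

Definition quot (L : lang) (s : seq Sigma) : lang := fun t => L (s ++ t).

Definition trunc (L : lang) (N : nat) : lang := fun t => L t /\ size t <= N.

Definition controllable (uc : pred Sigma) (M L : lang) : Prop :=
  forall s sigma, pref M s -> uc sigma -> L (rcons s sigma) -> pref M (rcons s sigma).

Definition supC (uc : pred Sigma) (M L : lang) : lang :=
  fun s => exists M', subl M' M /\ controllable uc M' L /\ M' s.

(* optimistic attitude f^N_optm(s); L = L(G), K = legal language *)
Definition f_optm (uc : pred Sigma) (L K : lang) (N : nat) (s : seq Sigma) : lang :=
  supC uc
    (fun t => trunc (quot K s) N t \/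
              (trunc (quot (pref K) s) N t /\ ~ trunc (quot (pref K) s) N.-1 t))
    (trunc (quot L s) N).

Definition gamma_optm (uc : pred Sigma) (L K : lang) (N : nat)
  (s : seq Sigma) (sigma : Sigma) : Prop :=
  pref (f_optm uc L K N s) [:: sigma] \/ (uc sigma /\ L (rcons s sigma)).

Inductive closed_loop (L : lang) (gamma : seq Sigma -> Sigma -> Prop) : lang :=
| CL_nil : closed_loop L gamma [::]
| CL_step s sigma : closed_loop L gamma s -> L (rcons s sigma) -> gamma s sigma ->
    closed_loop L gamma (rcons s sigma).

Definition Lc (uc : pred Sigma) (L : lang) : lang :=
  fun s => L s /\ forall sigma, uc sigma -> ~ L (rcons s sigma).

Definition K_mc (uc : pred Sigma) (L K : lang) : lang := fun s => K s /\ Lc uc L s.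

Definition K_fc (uc : pred Sigma) (L K : lang) : lang :=
  fun s => pref K s /\
    exists sigma, uc sigma /\ L (rcons s sigma) /\ ~ pref K (rcons s sigma).

(* the set of lengths |t| over which the max N_{mcf\bar c} is taken *)
Definition Nmcf_set (uc : pred Sigma) (L K : lang) (n : nat) : Prop :=
  exists s t, (K_mc uc L K s \/ s = [::]) /\ K_fc uc L K (s ++ t) /\
    (forall v w, t = v ++ w -> v <> [::] -> w <> [::] ->
        ~ (K_fc uc L K (s ++ v) \/ K_mc uc L K (s ++ v))) /\
    size t = n.

(* "N_{mcf\bar c} is defined and equals Nm": Nm is the maximum of that set *)
Definition is_Nmcf (uc : pred Sigma) (L K : lang) (Nm : nat) : Prop :=
  Nmcf_set uc L K Nm /\ forall n, Nmcf_set uc L K n -> n <= Nm.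

End LLP.

(* Main.v *)
Require Import Defs.
From mathcomp Require Import all_boot zify.
From Stdlib Require Import Classical.
Set Implicit Arguments. Unset Strict Implicit. Unset Printing Implicit Defensive.

Lemma min_ex (P : nat -> Prop) n : P n -> exists k, P k /\ forall j, j < k -> ~ P j.
Proof.
elim/ltn_ind: n => n IH Pn.
case: (classic (exists j, j < n /\ P j)) => [[j [Hj Pj]]|Hno].
  exact: (IH j Hj Pj).
exists n; split=> // j Hj Pj; apply: Hno; by exists j.
Qed.

Section Proof.
Variable Sigma : finType.
Variable uc : pred Sigma.
Variables Lm K : lang Sigma.
Notation L := (pref Lm).
Notation Kup := (supC uc K (pref Lm)).
Notation Kmc := (K_mc uc (pref Lm) K).
Notation Kfc := (K_fc uc (pref Lm) K).

Lemma pref_cat (M : lang Sigma) x y : pref M (x ++ y) -> pref M x.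
Proof. by case=> t H; exists (y ++ t); rewrite catA. Qed.

Lemma pref_self (M : lang Sigma) x : M x -> pref M x.
Proof. by move=> H; exists [::]; rewrite cats0. Qed.

Lemma pref_take (M : lang Sigma) x n : pref M x -> pref M (take n x).
Proof. move=> H; apply: (@pref_cat _ _ (drop n x)); by rewrite cat_take_drop. Qed.

Lemma Kup_ctrl : controllable uc Kup L.
Proof.
move=> s a [t [M' [HM' [HC HMst]]]] Ha HL.
have : pref M' (rcons s a) by apply: HC => //; exists t.
case=> t' Ht'. exists t'. exists M'. by [].
Qed.

Lemma ctrl_sub (M' : lang Sigma) : subl M' K -> controllable uc M' L ->
  forall x, pref M' x -> pref Kup x.
Proof. move=> H1 H2 x [t Ht]; exists t, M'; by []. Qed.

Lemma Kup_K x : pref Kup x -> pref K x.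
Proof. by case=> t [M' [H1 [_ H3]]]; exists t; apply: H1. Qed.

Lemma Kup_nofc x : pref Kup x -> ~ Kfc x.
Proof. move=> Hx [_ [a [Ha [HL HnK]]]]. apply: HnK. apply: Kup_K. exact: Kup_ctrl. Qed.

Lemma s0_decomp s : exists s0 r, s = s0 ++ r /\ (Kmc s0 \/ s0 = [::]) /\
  forall k, 0 < k <= size r -> ~ Kmc (s0 ++ take k r).
Proof.
elim/last_ind: s => [|s a [s0 [r [-> [H0 H]]]]].
  exists [::], [::]; split=> //; split; [by right|]. by move=> k /=; lia.
case: (classic (Kmc (rcons (s0 ++ r) a))) => Hm.
  exists (rcons (s0++r) a), [::]; split; first by rewrite cats0.
  split; [by left|]. move=> k /=; lia.
exists s0, (rcons r a); split; first by rewrite rcons_cat.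
split=> // k Hk.
rewrite size_rcons in Hk.
case: (leqP k (size r)) => Hkr.
  rewrite -cats1 takel_cat //; apply: H; lia.
rewrite take_oversize; first by rewrite -rcons_cat.
rewrite size_rcons; lia.
Qed.

Lemma prefix_split (x z s t : seq Sigma) : x ++ z = s ++ t ->
  (size x <= size s /\ exists w, s = x ++ w) \/
  (size s < size x /\ x = s ++ take (size x - size s) t /\ size x - size s <= size t).
Proof.
move=> E. have Hs : size x + size z = size s + size t by rewrite -!size_cat E.
case: (leqP (size x) (size s)) => H.
  left; split=> //; exists (take (size s - size x) z).
  have := congr1 (take (size s)) E. rewrite take_cat ltnNge H /= takel_cat // take_size.
  by move=> ->.
right; split=> //; split; last lia.
have := congr1 (take (size x)) E. rewrite takel_cat // take_size take_cat ltnNge (ltnW H) /=.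
by [].
Qed.


Section Sup.
Variables (N : nat) (p : seq Sigma).
Hypothesis HN1 : 0 < N.
Definition M0 (t : seq Sigma) := pref Kup (p ++ t) /\ size t <= N /\ (Kup (p ++ t) \/ size t = N).

Lemma M0_ext u : pref Kup (p ++ u) -> size u <= N -> exists v, M0 (u ++ v).
Proof.
case=> z Hz Hu.
case: (leqP (size (u ++ z)) N) => Hs.
  exists z; split; first by apply: pref_self; rewrite catA.
  split=> //; left; by rewrite catA.
have Hs' : size u + size z > N by rewrite size_cat in Hs.
exists (take (N - size u) z); split.
  exists (drop (N - size u) z). by rewrite -!catA cat_take_drop catA.
rewrite size_cat size_take_min; split; [lia|right; lia].
Qed.

Lemma M0_ctrl : controllable uc M0 (trunc (quot L p) N).
Proof.
move=> u a [v [Hv _]] Ha [HL Hsz].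
have Hu : pref Kup (p ++ u) by apply: (@pref_cat _ _ v); rewrite -catA.
have : pref Kup (p ++ rcons u a).
  rewrite -rcons_cat. apply: Kup_ctrl => //. by rewrite rcons_cat.
move/M0_ext => /(_ Hsz) [w Hw]. by exists w.
Qed.
End Sup.

Section Main.
Variables (Nm N : nat) (s : seq Sigma) (M' : lang Sigma).
Hypothesis HNm : is_Nmcf uc L K Nm.
Hypothesis HN : Nm + 1 <= N.
Hypothesis Hs : pref Kup s.
Hypothesis HMsub : subl M' (fun t => trunc (quot K s) N t \/
  (trunc (quot (pref K) s) N t /\ ~ trunc (quot (pref K) s) N.-1 t)).
Hypothesis HMc : controllable uc M' (trunc (quot L s) N).

Definition C2 (t : seq Sigma) := forall n, n <= N -> pref M' (take n t).
Definition C3 (t : seq Sigma) := forall n, 0 < n < size t -> ~ Kmc (s ++ take n t).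
Definition J2 (y : seq Sigma) := exists t, y = s ++ t /\ K y /\ C2 t /\ C3 t.

Lemma Mpref t : pref M' t -> pref K (s ++ t).
Proof.
case=> v /HMsub [[HK _]|[[HK _] _]]; rewrite /quot catA in HK.
  exact: pref_cat (pref_self HK).
exact: pref_cat HK.
Qed.

Lemma NoFC t : C2 t -> C3 t -> ~ Kfc (s ++ t).
Proof.
move=> H2 H3 Hfc.
have [s0 [r [Es [H0 Hr]]]] := s0_decomp s.
set T := r ++ t.
have PT : size T <= size T /\ Kfc (s0 ++ take (size T) T).
  by split=> //; rewrite take_size /T catA -Es.
have [k [[Hk Pk] Hmin]] := @min_ex (fun k => k <= size T /\ Kfc (s0 ++ take k T)) _ PT.
case: (leqP k (size r)) => Hkr.
  apply: (@Kup_nofc (s0 ++ take k T)) => //.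
  rewrite /T takel_cat //. apply: (@pref_cat _ _ (drop k r)).
  by rewrite -catA cat_take_drop -Es.
have ET : take k T = r ++ take (k - size r) t.
  by rewrite /T take_cat ltnNge (ltnW Hkr).
have Hst : size T = size r + size t by rewrite size_cat.
set m := k - size r.
have Hm : size (take m t) = m by rewrite size_take_min; lia.
case: (ltnP m N) => HmN.
  have Hfc' : Kfc (s ++ take m t) by rewrite Es -catA -ET.
  case: Hfc' => _ [a [Ha [HLa HnK]]].
  have Hp : pref M' (rcons (take m t) a).
    apply: HMc => //; first by apply: H2; lia.
    split; first by rewrite /quot -rcons_cat.
    rewrite size_rcons Hm; lia.
  apply: HnK; rewrite rcons_cat. exact: Mpref.
have : Nmcf_set uc L K k.
  exists s0, (take k T); split=> //; split=> //; split; last by rewrite size_take_min; lia.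
  move=> v w E Hv Hw.
  have Hsz : size v + size w = k by rewrite -size_cat -E size_take_min; lia.
  have Hv0 : 0 < size v by case: v Hv {E Hsz} => //.
  have Hw0 : 0 < size w by case: w Hw {E Hsz} => //.
  have Ev : v = take (size v) T.
    have Hvk : size v <= k by lia.
    by rewrite -(take_takel T Hvk) E takel_cat // take_size.
  case=> [Hf|Hmc].
    apply: (Hmin (size v)); first lia. split; first lia. by rewrite -Ev.
  case: (leqP (size v) (size r)) => Hvr.
    apply: (Hr (size v)); first lia. by rewrite Ev /T takel_cat in Hmc.
  apply: (H3 (size v - size r)); first lia.
  rewrite {1}Ev /T take_cat ltnNge (ltnW Hvr) /= catA -Es in Hmc. exact: Hmc.
move/(proj2 HNm). lia.
Qed.

Lemma Ext q : C2 q -> C3 q -> pref K (s ++ q) -> pref J2 (s ++ q).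
Proof.
move=> H2 H3 HK.
have [e' [[w Ew] [He2 HeK]]] : exists e', (exists w, e' = q ++ w) /\ C2 e' /\ K (s ++ e').
  case: (ltnP (size q) N) => Hq.
    have : pref M' q by rewrite -(take_size q); apply: H2; lia.
    case=> v Hv. case: (HMsub Hv) => [[HKv Hsz]|[[HKv Hsz] Hn]].
      exists (q ++ v); split; first by exists v.
      split=> // n _. exact: pref_take (pref_self Hv).
    have Hsz' : size (q ++ v) = N.
      case: (ltnP (N.-1) (size (q ++ v))) => H; first lia.
      exfalso; apply: Hn; split => //.
    case: HKv => w Hw.
    exists (q ++ v ++ w); split; first by exists (v ++ w).
    split; last by rewrite -!catA in Hw.
    move=> n Hn'. rewrite catA takel_cat; last lia.
    exact: pref_take (pref_self Hv).
  case: HK => w Hw. exists (q ++ w); split; first by exists w.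
  split; last by rewrite -catA in Hw. move=> n Hn. rewrite takel_cat; last lia. exact: H2.
have Hsq : size e' = size q + size w by rewrite Ew size_cat.
pose S n := size q <= n <= size e' /\ (n = size e' \/ (0 < n /\ Kmc (s ++ take n e'))).
have PS : S (size e') by split; [lia | left].
have [n [[Hn1 Hn2] Hmin]] := @min_ex S _ PS.
have Hq : take (size q) (take n e') = q.
  rewrite take_takel; last lia. by rewrite Ew takel_cat // take_size.
exists (drop (size q) (take n e')).
rewrite -catA -{1}Hq cat_take_drop.
exists (take n e'); split=> //; split.
  case: Hn2 => [->|[_ [HK' _]]]; last by [].
  by rewrite take_size.
have Hsn : size (take n e') = n by rewrite size_take_min; lia.
split.
  move=> j Hj. rewrite -take_min. apply: He2. lia.
move=> j Hj. rewrite Hsn in Hj.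
rewrite take_takel; last lia.
case: (ltnP j (size q)) => Hjq.
  rewrite Ew takel_cat; last lia. apply: H3. lia.
move=> Hmc. apply: (Hmin j); first lia. split; first lia. right; split=> //; lia.
Qed.


Definition J (y : seq Sigma) := Kup y \/ J2 y.

Lemma J_ctrl : controllable uc J L.
Proof.
move=> x a [z [HJ|HJ]] Ha HL.
  have : pref Kup (rcons x a) by apply: Kup_ctrl => //; exists z.
  by case=> v Hv; exists v; left.
case: HJ => t [E [HK [H2t H3t]]].
case: (prefix_split E) => [[_ [w Ew]]|[Hlt [Ex Hle]]].
  have : pref Kup (rcons x a).
    apply: Kup_ctrl => //. apply: (@pref_cat _ _ w). by rewrite -Ew.
  by case=> v Hv; exists v; left.
set m := size x - size s in Ex Hle.
set q := take m t in Ex.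
have Hsq : size q = m by rewrite /q size_take_min; lia.
have Hnmc : ~ Kmc x by case=> _ [_ Hc]; exact: (Hc a Ha HL).
have C2q : C2 q.
  move=> n Hn. rewrite /q -take_min. apply: H2t. lia.
have C3q : C3 q.
  move=> j Hj. rewrite /q take_takel; last lia. apply: H3t. lia.
have HpK : pref K x by exists z.
have Hnfc : ~ Kfc x by rewrite Ex; apply: NoFC.
have HpKa : pref K (rcons x a).
  apply: NNPP => Hn. apply: Hnfc. split=> //. by exists a.
have : pref J2 (s ++ rcons q a).
  apply: Ext.
  - move=> n Hn. case: (leqP n (size q)) => Hnq.
      rewrite -cats1 takel_cat //. exact: C2q.
    have Hpq : pref M' q by rewrite -(take_size q); apply: C2q; lia.
    rewrite take_oversize ?size_rcons //. apply: HMc => //.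
    split; first by rewrite /quot -rcons_cat -Ex.
    rewrite size_rcons; lia.
  - move=> j Hj. rewrite size_rcons in Hj. case: (ltnP j (size q)) => Hjq.
      rewrite -cats1 takel_cat; last lia. apply: C3q. lia.
    have -> : j = size q by lia.
    by rewrite -cats1 takel_cat // take_size -Ex.
  - by rewrite -rcons_cat -Ex.
rewrite -rcons_cat -Ex. by case=> v Hv; exists v; right.
Qed.

Lemma J_sub : subl J K.
Proof. move=> y [[M'' [H1 [_ H3]]]|[t [_ [HK _]]]] //. exact: H1. Qed.

Lemma Step sg t : M' (sg :: t) -> pref Kup (rcons s sg).
Proof.
move=> HM.
have Hp : pref M' [:: sg] by exists t.
have : pref J2 (s ++ [:: sg]).
  apply: Ext.
  - move=> [|n] Hn; first by exists (sg :: t).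
    by rewrite take_oversize.
  - move=> n /=; lia.
  - exact: Mpref.
rewrite cats1 => HJ2.
apply: (ctrl_sub J_sub J_ctrl). case: HJ2 => v Hv. by exists v; right.
Qed.

End Main.

End Proof.

Theorem theorem11 (Sigma : finType) (uc : pred Sigma) (Lm K : lang Sigma)
  (HKsub : subl K Lm)
  (HKclosed : forall s, K s <-> (pref K s /\ Lm s))
  (HKup : exists s, supC uc K (pref Lm) s)
  (Nm N : nat) (HNm : is_Nmcf uc (pref Lm) K Nm) (HN : Nm + 1 <= N) :
  forall s, closed_loop (pref Lm) (gamma_optm uc (pref Lm) K N) s <->
            pref (supC uc K (pref Lm)) s.
Proof.
have HN1 : 0 < N by lia.
move=> s; split.
- move=> H; elim: H => [|p sg Hp IH HL [Hg|[Huc HLs]]].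
  + by case: HKup => x Hx; exists x.
  + case: Hg => t [M' [Hsub [Hc HM]]]. exact: (Step HNm HN IH Hsub Hc HM).
  + exact: Kup_ctrl.
- elim/last_ind: s => [_|p sg IH Hps]; first by constructor.
  have Hp : pref (supC uc K (pref Lm)) p.
    by apply: (@pref_cat _ _ _ [:: sg]); rewrite cats1.
  apply: CL_step; first exact: IH.
  + case: (Kup_K Hps) => w Hw. exists w. exact: HKsub.
  + left. have Hq : pref (supC uc K (pref Lm)) (p ++ [:: sg]) by rewrite cats1.
    have [v Hv] := M0_ext HN1 Hq (HN1 : size [:: sg] <= N).
    exists v, (M0 uc Lm K N p); split; last split.
    * move=> t [Ht1 [Ht2 [Ht3|Ht3]]].
        left; split=> //. by case: Ht3 => M'' [H1 [_ H3]]; apply: H1.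
      right; split; first by split; [exact: Kup_K Ht1|exact: Ht2].
      case=> _ H. lia.
    * exact: M0_ctrl.
    * exact: Hv.
Qed.
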